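(* Let $\mathbb{R}^4_+ := \{x \in \mathbb{R}^4 : x_2^2 + x_3^2 + x_4^2 \le 2x_1x_2 \text{ and } x_1 \ge 0\}$ and let $A \in \mathbb{R}^{4\times 4}$ be the block diagonal matrix $$A = \begin{pmatrix} 0 & 1 & 0 & 0\\ 0 & 0 & 0 & 0 \\ 0 & 0 & 0 & 4\pi \\ 0 & 0 & -\pi & 0\end{pmatrix}.$$ Then $\mathbb{R}^4_+$ is a closed cone with non-empty interior, and the semigroup $(e^{tA})_{t\ge 0}$ is individually eventually nonnegative but not uniformly eventually nonnegative with respect to $\mathbb{R}^4_+$.
   Context: Let $X$ be a finite-dimensional real vector space, ordered by a closed cone $X_+$ with non-empty interior, and $A: X\to X$ linear. $(e^{tA})_{t\ge0}$ is uniformly eventually nonnegative if there is $t_0\ge 0$ with $e^{tA}X_+\subseteq X_+$ for all $t\ge t_0$; individually eventually nonnegative if for each $x\in X_+$ there is $t_0\ge0$ with $e^{tA}x\in X_+$ for all $t\ge t_0$. *)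

(* Defs.v *)
From HB Require Import structures.
From mathcomp Require Import all_boot all_order all_algebra.
From mathcomp Require Import all_classical all_reals all_analysis.
Set Implicit Arguments. Unset Strict Implicit. Unset Printing Implicit Defensive.
Import Order.TTheory GRing.Theory Num.Theory.
Import numFieldNormedType.Exports.
Local Open Scope classical_set_scope.
Local Open Scope ring_scope.

Definition expm (R : realType) (n : nat) (M : 'M[R]_n.+1) : 'M[R]_n.+1 :=
  limn (series (fun k : nat => (k`!%:R)^-1 *: M ^+ k)).

Definition is_cone (R : realType) (n : nat) (K : set 'cV[R]_n) : Prop :=
  [/\ (forall x y, K x -> K y -> K (x + y)),
      (forall (a : R) x, 0 <= a -> K x -> K (a *: x)) &
      (forall x, K x -> K (- x) -> x = 0)].

Definition unif_ev_nonneg (R : realType) (n : nat) (K : set 'cV[R]_n.+1)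
  (A : 'M[R]_n.+1) : Prop :=
  exists t0 : R, 0 <= t0 /\
    forall t : R, t0 <= t -> forall x, K x -> K (expm (t *: A) *m x).

Definition indiv_ev_nonneg (R : realType) (n : nat) (K : set 'cV[R]_n.+1)
  (A : 'M[R]_n.+1) : Prop :=
  forall x, K x -> exists t0 : R, 0 <= t0 /\
    forall t : R, t0 <= t -> K (expm (t *: A) *m x).

(* The cone R^4_+ = {x : x2^2 + x3^2 + x4^2 <= 2 x1 x2, x1 >= 0}
   (coordinates x1..x4 are the entries 0..3 of a column vector). *)
Definition K4 (R : realType) : set 'cV[R]_4 :=
  [set x | (x 1%R 0%R) ^+ 2 + (x 2%:R 0%R) ^+ 2 + (x 3%:R 0%R) ^+ 2
             <= 2 * (x 0%R 0%R) * (x 1%R 0%R)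
           /\ 0 <= x 0%R 0%R].

Definition A4 (R : realType) : 'M[R]_4 :=
  \matrix_(i < 4, j < 4)
    (if (i == 0%N :> nat) && (j == 1%N :> nat) then 1
     else if (i == 2%N :> nat) && (j == 3%N :> nat) then 4 * pi
     else if (i == 3%N :> nat) && (j == 2%N :> nat) then - pi
     else 0).

(* Main.v *)
Require Import Defs.
From HB Require Import structures.
From mathcomp Require Import all_boot all_order all_algebra.
From mathcomp Require Import all_classical all_reals all_analysis.
From mathcomp Require Import ring lra.
Import Order.TTheory GRing.Theory Num.Theory.
Import numFieldNormedType.Exports.
Local Open Scope classical_set_scope.
Local Open Scope ring_scope.

Section M.
Variable R : realType.
Definition mk (a00 a01 a11 a22 a23 a32 a33 : R) : 'M[R]_4 :=
  \matrix_(i < 4, j < 4)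
    (if (i == 0%N :> nat) && (j == 0%N :> nat) then a00
     else if (i == 0%N :> nat) && (j == 1%N :> nat) then a01
     else if (i == 1%N :> nat) && (j == 1%N :> nat) then a11
     else if (i == 2%N :> nat) && (j == 2%N :> nat) then a22
     else if (i == 2%N :> nat) && (j == 3%N :> nat) then a23
     else if (i == 3%N :> nat) && (j == 2%N :> nat) then a32
     else if (i == 3%N :> nat) && (j == 3%N :> nat) then a33
     else 0).

Lemma mk_mul a00 a01 a11 a22 a23 a32 a33 b00 b01 b11 b22 b23 b32 b33 :
  mk a00 a01 a11 a22 a23 a32 a33 *m mk b00 b01 b11 b22 b23 b32 b33 =
  mk (a00*b00) (a00*b01 + a01*b11) (a11*b11) (a22*b22+a23*b32) (a22*b23+a23*b33)
     (a32*b22+a33*b32) (a32*b23+a33*b33).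
Proof.
apply/matrixP => i j; rewrite !mxE !big_ord_recl big_ord0 !mxE.
case: i => [[|[|[|[|i]]]] Hi] //; case: j => [[|[|[|[|j]]]] Hj] //=; ring.
Qed.

Lemma mk_decomp a00 a01 a11 a22 a23 a32 a33 b00 b01 b11 b22 b23 b32 b33 (k : R) :
  k *: mk a00 a01 a11 a22 a23 a32 a33 + mk b00 b01 b11 b22 b23 b32 b33 =
  mk (k*a00+b00) (k*a01+b01) (k*a11+b11) (k*a22+b22) (k*a23+b23) (k*a32+b32) (k*a33+b33).
Proof.
apply/matrixP => i j; rewrite !mxE.
case: i => [[|[|[|[|i]]]] Hi] //=; case: j => [[|[|[|[|j]]]] Hj] //=; ring.
Qed.

Lemma mk1 : 1 = mk 1 0 1 1 0 0 1.
Proof.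
apply/matrixP => i j; rewrite !mxE.
by case: i => [[|[|[|[|i]]]] Hi] //; case: j => [[|[|[|[|j]]]] Hj].
Qed.

Lemma A4E : A4 R = mk 0 1 0 0 (4 * pi) (- pi) 0.
Proof.
apply/matrixP => i j; rewrite !mxE.
by case: i => [[|[|[|[|i]]]] Hi] //; case: j => [[|[|[|[|j]]]] Hj].
Qed.

Definition ca (c : R) n := (~~ odd n)%:R * (-1)^+ n./2 * c^+n.
Definition sb (c : R) n := (odd n)%:R * (-1)^+ n.-1./2 * c^+n.
Lemma ca_rec c n : ca c n.+1 = - c * sb c n.
Proof.
rewrite /ca /sb /= negbK exprS; case: (boolP (odd n)) => on /=.
  have -> : n.-1./2 = n./2 by rewrite -{1}(odd_double_half n) on add1n /= half_double.
  rewrite uphalf_half on /= exprS; ring.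
by rewrite !mul0r mulr0.
Qed.
Lemma sb_rec c n : sb c n.+1 = c * ca c n.
Proof.
rewrite /sb /ca /= exprS; case: (boolP (odd n)) => on /=.
  by rewrite !mul0r mulr0.
ring.
Qed.

Lemma A4X n : A4 R ^+ n = mk (n == 0)%:R (n == 1)%:R (n == 0)%:R (ca (2 * pi) n)
   (2 * sb (2 * pi) n) (- (1/2) * sb (2 * pi) n) (ca (2 * pi) n).
Proof.
elim: n => [|n IH].
  by rewrite expr0 mk1 /ca /sb /= !mul0r !mulr0 !mul1r.
rewrite exprS IH A4E -mulmxE mk_mul ca_rec sb_rec /=.
have h : (n.+1 == 1)%N = (n == 0)%N by [].
by rewrite h; congr mk; field.
Qed.
End M.

Section M.
Variable R : realType.
Definition Pm := mk R 1 0 1 0 0 0 0.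
Definition Qm := mk R 0 1 0 0 0 0 0.
Definition Cm := mk R 0 0 0 1 0 0 1.
Definition Sm := mk R 0 0 0 0 2 (-(1/2)) 0.

Lemma cosc (x : R) k : cos_coeff x k = (k`!%:R)^-1 * ca R x k.
Proof. by rewrite /cos_coeff /ca /= [LHS]mulrC. Qed.
Lemma sinc (x : R) k : sin_coeff x k = (k`!%:R)^-1 * sb R x k.
Proof. by rewrite /sin_coeff /sb /= [LHS]mulrC. Qed.
Lemma caM (x y : R) k : ca R (x * y) k = ca R x k * y ^+ k.
Proof. rewrite /ca exprMn; ring. Qed.
Lemma sbM (x y : R) k : sb R (x * y) k = sb R x k * y ^+ k.
Proof. rewrite /sb exprMn; ring. Qed.

Lemma termE (t : R) k : (k`!%:R)^-1 *: (t *: A4 R) ^+ k =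
  (k==0)%:R *: Pm + ((k==1)%:R * t) *: Qm + cos_coeff (2*pi*t) k *: Cm
  + sin_coeff (2*pi*t) k *: Sm.
Proof.
rewrite exprZn A4X scalerA cosc sinc (caM (2*pi) t) (sbM (2*pi) t) /Pm /Qm /Cm /Sm.
apply/matrixP => i j; rewrite !mxE.
case: k => [|[|k]]; rewrite ?fact0 ?factS ?fact0 ?muln1 /=;
case: i => [[|[|[|[|i]]]] Hi] //=; case: j => [[|[|[|[|j]]]] Hj] //=; try field;
rewrite /ca /sb /=; try field; try done.
all: have := ler0n R k; rewrite pnatr_eq0 -lt0n fact_gt0 /= => h; apply/andP; split; apply/eqP; lra.
Qed.
End M.

Section M.
Variable R : realType.

Lemma cvg_cos (x : R) : series (cos_coeff x) @ \oo --> cos x.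
Proof. rewrite unlock; exact: is_cvg_series_cos_coeff. Qed.
Lemma cvg_sin (x : R) : series (sin_coeff x) @ \oo --> sin x.
Proof. rewrite unlock; exact: is_cvg_series_sin_coeff. Qed.

Lemma cvg_ind0 : series (fun k : nat => (k == 0)%:R : R) @ \oo --> (1:R).
Proof.
apply: cvg_near_cst; near=> n.
have n0 : (0 < n)%N by near: n; exists 1%N.
rewrite /series /= big_ltn //= big_nat_cond big1 ?addr0 //.
by move=> [|i] //.
Unshelve. all: by end_near. Qed.

Lemma cvg_ind1 (t : R) : series (fun k : nat => (k == 1)%:R * t) @ \oo --> t.
Proof.
apply: cvg_near_cst; near=> n.
have n0 : (1 < n)%N by near: n; exists 2%N.
rewrite /series /= big_ltn ?(ltn_trans _ n0) //= big_ltn //= big_nat_cond big1 ?addr0.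
  by rewrite mul0r add0r mul1r.
by move=> [|[|i]] //; rewrite mul0r.
Unshelve. all: by end_near. Qed.

Definition Em (t : R) := Pm R + t *: Qm R + cos (2*pi*t) *: Cm R + sin (2*pi*t) *: Sm R.

Lemma expm_cvg t : series (fun k : nat => (k`!%:R)^-1 *: (t *: A4 R) ^+ k) @ \oo --> Em t.
Proof.
have -> : series (fun k : nat => (k`!%:R)^-1 *: (t *: A4 R) ^+ k) =
  (fun n => series (fun k : nat => (k == 0)%:R : R) n *: Pm R)
         + (fun n => series (fun k : nat => (k == 1)%:R * t) n *: Qm R)
         + (fun n => series (cos_coeff (2*pi*t)) n *: Cm R)
         + (fun n => series (sin_coeff (2*pi*t)) n *: Sm R).
  apply/funext => n; rewrite /series /=.
  rewrite (eq_bigr _ (fun k _ => termE R t k)) !big_split /= !fctE !scaler_suml.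
  done.
rewrite /Em -{2}[Pm R]scale1r.
apply: cvgD; [apply: cvgD; [apply: cvgD|]|]; apply: cvgZr_tmp.
- exact: cvg_ind0.
- exact: cvg_ind1.
- exact: cvg_cos.
- exact: cvg_sin.
Qed.

Lemma expmE t : expm (t *: A4 R) = Em t.
Proof. by rewrite /expm; apply: cvg_lim => //; exact: expm_cvg. Qed.
End M.

Section M.
Variable R : realType.

Lemma EmulE (t : R) (x : 'cV[R]_4) : let cs := cos (2*pi*t) in let sn := sin (2*pi*t) in
  Em R t *m x = \col_i (if (i == 0%N :> nat) then x 0%R 0%R + t * x 1%R 0%R
                     else if (i == 1%N :> nat) then x 1%R 0%R
                     else if (i == 2%N :> nat) then cs * x 2%:R 0%R + 2 * sn * x 3%:R 0%R
                     else - (1/2) * sn * x 2%:R 0%R + cs * x 3%:R 0%R).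
Proof.
move=> cs sn; apply/matrixP => i j; rewrite /Em !mxE !big_ord_recl big_ord0 !mxE /=.
rewrite (ord1 j).
have e3 : lift ord0 (lift ord0 (lift ord0 ord0)) = 3%:R :> 'I_4 by apply/val_inj.
have e2 : lift ord0 (lift ord0 ord0) = 2%:R :> 'I_4 by apply/val_inj.
have e1 : lift ord0 ord0 = 1%R :> 'I_4 by apply/val_inj.
have e0 : ord0 = 0%R :> 'I_4 by apply/val_inj.
have e0' : ord0 = 0%R :> 'I_1 by apply/val_inj.
rewrite e3 e2 e1 ?e0 ?e0' /cs /sn.
case: i => [[|[|[|[|i]]]] Hi] //=; ring.
Qed.
End M.

Section M.
Variable R : realType.

Definition fK (x : 'cV[R]_4) := (x 1%R 0%R) ^+ 2 + (x 2%:R 0%R) ^+ 2 + (x 3%:R 0%R) ^+ 2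
             - 2 * (x 0%R 0%R) * (x 1%R 0%R).
Definition gK (x : 'cV[R]_4) := x 0%R 0%R.

Lemma cont_gK : continuous gK.
Proof. exact: coord_continuous. Qed.

Lemma cont_fK : continuous fK.
Proof.
move=> x; rewrite /fK.
have c i : {for x, continuous (fun y : 'cV[R]_4 => y i 0%R)} by exact: coord_continuous.

have s i : {for x, continuous (fun y : 'cV[R]_4 => y i 0%R ^+ 2)}.
  exact: (cvgM (c i) (c i)).
have m : {for x, continuous (fun y : 'cV[R]_4 => 2 * y 0%R 0%R * y 1%R 0%R)}.
  have := cvgM (cvgM (cvg_cst (2:R)) (c 0%R)) (c 1%R). by move=> h; apply: h.
exact: (cvgB (cvgD (cvgD (s 1%R) (s 2%:R)) (s 3%:R)) m).
Qed.

Lemma closedK : closed (@K4 R).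
Proof.
have -> : @K4 R = fK @^-1` [set r | r <= 0] `&` gK @^-1` [set r | 0 <= r].
  apply/seteqP; split => x /=; rewrite /K4 /fK /gK /=; case=> h1 h2; split => //; lra.
apply: closedI; apply: preimage_closed.
- by move=> y _; exact: cont_fK.
- exact: closed_le.
- by move=> y _; exact: cont_gK.
- exact: closed_ge.
Qed.

Lemma interiorK : (@K4 R)° !=set0.
Proof.
pose U := fK @^-1` [set r | r < 0] `&` gK @^-1` [set r | 0 < r].
have oU : open U.
  apply: openI; apply: open_comp.
  - by move=> y _; exact: cont_fK.
  - exact: open_lt.
  - by move=> y _; exact: cont_gK.
  - exact: open_gt.
have sU : U `<=` (@K4 R)°.
  rewrite -open_subsetE //.
  move=> x [/= h1 h2]; rewrite /K4 /=; rewrite /fK /gK in h1 h2; split; lra.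
pose x0 : 'cV[R]_4 := \col_i (if (i == 0%N :> nat) || (i == 1%N :> nat) then 1 else 0).
exists x0; apply: sU; split; rewrite /= /fK /gK /x0 !mxE /=; lra.
Qed.
End M.

Section M.
Variable R : realType.

Lemma cone_add (p a c d p' a' c' d' : R) :
  a ^+ 2 + c ^+ 2 + d ^+ 2 <= 2 * p * a -> 0 <= p ->
  a' ^+ 2 + c' ^+ 2 + d' ^+ 2 <= 2 * p' * a' -> 0 <= p' ->
  (a + a') ^+ 2 + (c + c') ^+ 2 + (d + d') ^+ 2 <= 2 * (p + p') * (a + a').
Proof.
move=> h hp h' hp'.
have a0 : 0 <= a by nra.
have a0' : 0 <= a' by nra.
have b0 : 0 <= 2 * p - a.
  have [->|az] := eqVneq a 0; first lra.
  have ap : 0 < a by rewrite lt_def az.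
  nra.
have b0' : 0 <= 2 * p' - a'.
  have [->|az] := eqVneq a' 0; first lra.
  have ap : 0 < a' by rewrite lt_def az.
  nra.
set b := 2 * p - a; set b' := 2 * p' - a'.
have e1 : c ^+ 2 + d ^+ 2 <= a * b by rewrite /b; nra.
have e1' : c' ^+ 2 + d' ^+ 2 <= a' * b' by rewrite /b'; nra.
have h1 : (c * c' + d * d') ^+ 2 <= (c ^+ 2 + d ^+ 2) * (c' ^+ 2 + d' ^+ 2).
  have := sqr_ge0 (c * d' - d * c'); nra.
have h2 : (c ^+ 2 + d ^+ 2) * (c' ^+ 2 + d' ^+ 2) <= (a * b) * (a' * b').
  apply: ler_pM => //; nra.
have h3 : 4 * ((a * b) * (a' * b')) <= (a * b' + a' * b) ^+ 2.
  have := sqr_ge0 (a * b' - a' * b); nra.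
have h4 : 0 <= a * b' + a' * b by apply: addr_ge0; apply: mulr_ge0.
have h5 : 2 * (c * c' + d * d') <= a * b' + a' * b.
  have uv : (2 * (c * c' + d * d')) ^+ 2 <= (a * b' + a' * b) ^+ 2.
    have -> : (2 * (c * c' + d * d')) ^+ 2 = 4 * (c * c' + d * d') ^+ 2 by ring.
    lra.
  move: uv h4; set u := 2 * (c * c' + d * d'); set v := a * b' + a' * b => uv h4.
  have [u0|u0] := lerP u 0; first lra.
  have uv0 : 0 < u + v by lra.
  nra.
rewrite /b /b' in h5; nra.
Qed.
End M.

Section M.
Variable R : realType.

Lemma cV4_eq0 (x : 'cV[R]_4) : x 0%R 0%R = 0 -> x 1%R 0%R = 0 -> x 2%:R 0%R = 0 ->
  x 3%:R 0%R = 0 -> x = 0.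
Proof.
move=> h0 h1 h2 h3; apply/matrixP => i j; rewrite (ord1 j) mxE.
case: i => [[|[|[|[|i]]]] Hi] //.
- by rewrite -h0; congr (x _ _); apply/val_inj.
- by rewrite -h1; congr (x _ _); apply/val_inj.
- by rewrite -h2; congr (x _ _); apply/val_inj.
- by rewrite -h3; congr (x _ _); apply/val_inj.
Qed.

Lemma coneK : is_cone (@K4 R).
Proof.
split.
- move=> x y [hx px] [hy py]; rewrite /K4 /= !mxE; split; last by rewrite addr_ge0.
  exact: cone_add.
- move=> a x a0 [hx px]; rewrite /K4 /= !mxE; split; last by rewrite mulr_ge0.
  have := ler_wpM2l (sqr_ge0 a) hx; lra.
- move=> x [hx px] [hy py]; rewrite /K4 /= !mxE in hy py.
  have p0 : x 0%R 0%R = 0 by lra.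
  rewrite p0 mulr0 mul0r in hx.
  apply: cV4_eq0 => //; apply/eqP; rewrite -sqrf_eq0 eq_le sqr_ge0 andbT; nra.
Qed.
End M.

Section M.
Variable R : realType.

Lemma indivK : indiv_ev_nonneg (@K4 R) (@A4 R).
Proof.
move=> x [h p0].
set p := x 0%R 0%R in h p0 *; set a := x 1%R 0%R in h *;
set c := x 2%:R 0%R in h *; set d := x 3%:R 0%R in h *.
have a0 : 0 <= a by nra.
exists (5 * (c ^+ 2 + d ^+ 2) / (2 * a ^+ 2)); split.
  by apply: divr_ge0; [nra|nra].
move=> t ht.
have t0 : 0 <= t.
  apply: le_trans ht; apply: divr_ge0; nra.
rewrite expmE EmulE /K4 /= !mxE /=.
rewrite -/p -/a -/c -/d.
have hcs := cos2Dsin2 (2 * pi * t).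
set cs := cos (2 * pi * t) in hcs *; set sn := sin (2 * pi * t) in hcs *.
have y2 : (cs * c + 2 * sn * d) ^+ 2 <= c ^+ 2 + 4 * d ^+ 2.
  have e : (cs * c + 2 * sn * d) ^+ 2 + (sn * c - 2 * cs * d) ^+ 2 =
    (cs ^+ 2 + sn ^+ 2) * (c ^+ 2 + 4 * d ^+ 2) by ring.
  rewrite hcs mul1r in e; have := sqr_ge0 (sn * c - 2 * cs * d); lra.
have y3 : (- (1/2) * sn * c + cs * d) ^+ 2 <= c ^+ 2 / 4 + d ^+ 2.
  have e : (- (1/2) * sn * c + cs * d) ^+ 2 + (cs * c / 2 + sn * d) ^+ 2 =
    (cs ^+ 2 + sn ^+ 2) * (c ^+ 2 / 4 + d ^+ 2) by field.
  rewrite hcs mul1r in e; have := sqr_ge0 (cs * c / 2 + sn * d); lra.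
split; last by have := mulr_ge0 t0 a0; lra.
have [a00|an0] := eqVneq a 0.
  rewrite a00 in h *.
  have := sqr_ge0 c; have := sqr_ge0 d; lra.
have ap : 0 < a by rewrite lt_def an0.
rewrite ler_pdivrMr in ht; last by nra.
have := sqr_ge0 c; have := sqr_ge0 d; nra.
Qed.
End M.

Section M.
Variable R : realType.

Lemma good_t (t0 : R) : exists t, t0 <= t /\ cos (2 * pi * t) = 0 /\ sin (2 * pi * t) = 1.
Proof.
have hn : t0 < (Num.truncn t0).+1%:R by exact: truncnS_gt.
move: hn; set n := (Num.truncn t0).+1 => hn; clearbody n.
exists (n%:R + 1/4); split; first lra.
have -> : 2 * pi * (n%:R + 1/4) = pi / 2 + (pi *+ 2) *+ n :> R.
  by rewrite -mulrnA -[pi *+ _]mulr_natr natrM; field.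
by rewrite (periodicn (@cosD2pi R)) (periodicn (@sinD2pi R)) cos_pihalf sin_pihalf.
Qed.

Lemma not_unifK : ~ unif_ev_nonneg (@K4 R) (@A4 R).
Proof.
move=> [t0 [t00 H]].
have [t [tt0 [ct st]]] := good_t t0.
pose x : 'cV[R]_4 := \col_i (if (i == 0%N :> nat) then ((t + 1) ^+ 2 + 1) / 2
   else if (i == 1%N :> nat) then 1
   else if (i == 2%N :> nat) then 0 else t + 1).
have Kx : K4 x.
  rewrite /K4 /x /= !mxE /=; have := sqr_ge0 (t + 1); split; lra.
have := H t tt0 x Kx.
rewrite expmE EmulE /K4 /x /= !mxE /= ct st => -[h _].
have : 0 <= t by lra.
nra.
Qed.
End M.


Theorem mainTheorem4 (R : realType) :
  [/\ closed (@K4 R), is_cone (@K4 R), interior (@K4 R) !=set0,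
      indiv_ev_nonneg (@K4 R) (@A4 R) & ~ unif_ev_nonneg (@K4 R) (@A4 R)].
Proof.
split.
- exact: closedK.
- exact: coneK.
- exact: interiorK.
- exact: indivK.
- exact: not_unifK.
Qed.
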